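(* Consider two candidates $P,Q$. Let $A$ be the voters preferring $P$ (with strengths $\alpha_i=d(i,Q)/d(i,P)$) and $B$ the voters preferring $Q$ (with strengths $\beta_j=d(j,P)/d(j,Q)$). If $$\sum_{i\in A}\frac{\sqrt2\alpha_i-1}{\alpha_i+1}\ \ge\ \sum_{j\in B,\ \beta_j>\sqrt2}\frac{\beta_j-\sqrt2}{\beta_j-1}-\sum_{j\in B,\ \beta_j\le\sqrt2}\frac{\sqrt2-\beta_j}{\beta_j+1},$$ then $SC(P)\le\sqrt2\,SC(Q)$.
   Context: Voters $N=A\cup B$ and candidates $P,Q$ are points of an arbitrary metric space $(X,d)$, where $A=\{i: d(i,P)\le d(i,Q)\}$ and $B=N\setminus A$ consists of voters with $d(j,Q)<d(j,P)$ (or, more generally, a partition into voters preferring $P$ and voters preferring $Q$ consistent with the distances). $SC(Y)=\sum_{i\in N}d(i,Y)$. *)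

(* Defs.v *)
From Stdlib Require Import Reals Lra List.
Open Scope R_scope.

Definition is_metric {X : Type} (d : X -> X -> R) : Prop :=
  (forall x y, 0 <= d x y) /\
  (forall x y, d x y = 0 <-> x = y) /\
  (forall x y, d x y = d y x) /\
  (forall x y z, d x z <= d x y + d y z).

Definition Rsum (l : list R) : R := fold_right Rplus 0 l.

Definition bool_of {A B : Prop} (s : {A} + {B}) : bool := if s then true else false.

Definition SC {X : Type} (d : X -> X -> R) (N : list X) (Y : X) : R :=
  Rsum (map (fun i => d i Y) N).

Definition inA {X : Type} (d : X -> X -> R) (P Q : X) (i : X) : bool :=
  bool_of (Rle_dec (d i P) (d i Q)).
Definition inB {X : Type} (d : X -> X -> R) (P Q : X) (j : X) : bool :=
  negb (inA d P Q j).

(** Strengths alpha_i = d(i,Q)/d(i,P) and beta_j = d(j,P)/d(j,Q)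
    (meaningful when the denominators are positive). *)
Definition alpha {X : Type} (d : X -> X -> R) (P Q : X) (i : X) : R := d i Q / d i P.
Definition beta  {X : Type} (d : X -> X -> R) (P Q : X) (j : X) : R := d j P / d j Q.

(** Summand for i in A: (sqrt2 alpha_i - 1)/(alpha_i + 1); when d(i,P) = 0 the
    strength is alpha_i = +infinity and the summand is its limit sqrt 2. *)
Definition termA {X : Type} (d : X -> X -> R) (P Q : X) (i : X) : R :=
  if Rlt_dec 0 (d i P)
  then (sqrt 2 * alpha d P Q i - 1) / (alpha d P Q i + 1)
  else sqrt 2.

(** "beta_j > sqrt 2"; beta_j = +infinity when d(j,Q) = 0. *)
Definition beta_big {X : Type} (d : X -> X -> R) (P Q : X) (j : X) : bool :=
  if Rlt_dec 0 (d j Q) then bool_of (Rlt_dec (sqrt 2) (beta d P Q j)) else true.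

(** Summand (beta_j - sqrt2)/(beta_j - 1) for beta_j > sqrt 2; its value at
    beta_j = +infinity is the limit 1. *)
Definition termB_big {X : Type} (d : X -> X -> R) (P Q : X) (j : X) : R :=
  if Rlt_dec 0 (d j Q)
  then (beta d P Q j - sqrt 2) / (beta d P Q j - 1)
  else 1.

(** Summand (sqrt2 - beta_j)/(beta_j + 1) for beta_j <= sqrt 2 (finite there). *)
Definition termB_small {X : Type} (d : X -> X -> R) (P Q : X) (j : X) : R :=
  (sqrt 2 - beta d P Q j) / (beta d P Q j + 1).

(* Main.v *)
Require Import Defs.
From Stdlib Require Import Reals List Bool Lra.
Open Scope R_scope.

Lemma s2_facts : sqrt 2 * sqrt 2 = 2 /\ 1 < sqrt 2.
Proof.
  split. apply sqrt_sqrt; lra.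
  rewrite <- sqrt_1. apply sqrt_lt_1; lra.
Qed.

Lemma div_nn (x y : R) : 0 <= x -> 0 < y -> 0 <= x / y.
Proof. intros. unfold Rdiv. apply Rmult_le_pos; [lra|]. left; apply Rinv_0_lt_compat; lra. Qed.

Definition coef {X : Type} (d : X -> X -> R) (P Q : X) (i : X) : R :=
  if inA d P Q i then - termA d P Q i
  else if beta_big d P Q i then termB_big d P Q i else - termB_small d P Q i.

Lemma voter {X : Type} (d : X -> X -> R) (P Q : X) (Hd : is_metric d) (i : X) :
  d i P - sqrt 2 * d i Q <= d P Q * coef d P Q i.
Proof.
  destruct Hd as [Hnn [_ [Hsym Htri]]].
  destruct s2_facts as [Hs2 Hs1].
  set (s := sqrt 2) in *.
  assert (T1 : d P Q <= d i P + d i Q) by (rewrite (Hsym i P); apply Htri).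
  assert (T2 : d i P <= d P Q + d i Q) by (pose proof (Htri i Q P); rewrite (Hsym Q P) in *; lra).
  assert (T3 : d i Q <= d P Q + d i P) by (pose proof (Htri i P Q); lra).
  pose proof (Hnn i P). pose proof (Hnn i Q). pose proof (Hnn P Q).
  set (a := d i P) in *. set (b := d i Q) in *. set (D := d P Q) in *.
  unfold coef, inA, bool_of, termA, beta_big, termB_big, termB_small, alpha, beta.
  fold a b s.
  destruct (Rle_dec a b) as [Hab|Hab].
  - destruct (Rlt_dec 0 a) as [Ha|Ha].
    + assert (E : (s * (b / a) - 1) / (b / a + 1) = (s * b - a) / (a + b))
        by (field; lra).
      rewrite E.
      assert (Ht : 0 <= (s * b - a) / (a + b)).
      { apply div_nn; nra. }
      assert (E2 : a - s * b = - (a + b) * ((s * b - a) / (a + b))) by (field; lra).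
      rewrite E2. nra.
    + assert (a = 0) by lra. nra.
  - destruct (Rlt_dec 0 b) as [Hb|Hb].
    + destruct (Rlt_dec s (a / b)) as [Hbb|Hbb]; simpl.
      * assert (Ha : a = (a / b) * b) by (field; lra).
        assert (Hasb : s * b < a) by (rewrite Ha; nra).
        assert (E : (a / b - s) / (a / b - 1) = (a - s * b) / (a - b))
          by (field; lra).
        rewrite E.
        assert (Ht : 0 <= (a - s * b) / (a - b)).
        { apply div_nn; lra. }
        assert (E2 : a - s * b = (a - b) * ((a - s * b) / (a - b))) by (field; lra).
        rewrite E2 at 1. nra.
      * assert (Ha : a = (a / b) * b) by (field; lra).
        assert (Hasb : a <= s * b) by (rewrite Ha; nra).
        assert (E : (s - a / b) / (a / b + 1) = (s * b - a) / (a + b))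
          by (field; lra).
        rewrite E.
        assert (Ht : 0 <= (s * b - a) / (a + b)).
        { apply div_nn; lra. }
        assert (E2 : a - s * b = - (a + b) * ((s * b - a) / (a + b))) by (field; lra).
        rewrite E2. nra.
    + simpl. assert (b = 0) by lra. nra.
Qed.

Theorem mainTheorem11 (X : Type) (d : X -> X -> R) (N : list X) (P Q : X)
  (Hd : is_metric d)
  (Hcond :
     Rsum (map (termA d P Q) (filter (inA d P Q) N))
     >= Rsum (map (termB_big d P Q)
                (filter (fun j => inB d P Q j && beta_big d P Q j) N))
        - Rsum (map (termB_small d P Q)
                (filter (fun j => inB d P Q j && negb (beta_big d P Q j)) N))) :
  SC d N P <= sqrt 2 * SC d N Q.
Proof.
  assert (HD : 0 <= d P Q) by (destruct Hd as [H _]; apply H).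
  assert (Key : SC d N P - sqrt 2 * SC d N Q <= d P Q *
     (Rsum (map (termB_big d P Q)
                (filter (fun j => inB d P Q j && beta_big d P Q j) N))
        - Rsum (map (termB_small d P Q)
                (filter (fun j => inB d P Q j && negb (beta_big d P Q j)) N))
      - Rsum (map (termA d P Q) (filter (inA d P Q) N)))).
  { clear Hcond. induction N as [|x N IH].
    - unfold SC; simpl. lra.
    - pose proof (voter d P Q Hd x) as Hv.
      unfold SC in *. unfold inB, coef in *. simpl.
      destruct (inA d P Q x); destruct (beta_big d P Q x); simpl in *; nra. }
  assert (0 <= d P Q * (Rsum (map (termA d P Q) (filter (inA d P Q) N)) -
     (Rsum (map (termB_big d P Q)
                (filter (fun j => inB d P Q j && beta_big d P Q j) N))
        - Rsum (map (termB_small d P Q)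
                (filter (fun j => inB d P Q j && negb (beta_big d P Q j)) N))))).
  { apply Rmult_le_pos; lra. }
  nra.
Qed.
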